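(* For every finite alphabet $\Sigma$ with $|\Sigma|\ge1$, the minimum deterministic finite automaton over $\Sigma$ recognizing $L_{\mathrm{UNIQ}}$ has at least $2^{|\Sigma|-1}$ states.
   Context: Let $\Sigma$ be a finite alphabet and $\$\notin\Sigma$ a delimiter symbol; $\Sigma_\$=\Sigma\cup\{\$\}$. The bigram map $\Phi$ sends a string $z\in\$\Sigma^*\$$ to the vector $\Phi(z)\in\mathbb{N}^{\Sigma_\$^2}$ whose $(i,j)$ entry is the number of positions at which the two-letter string $ij$ occurs as a contiguous factor of $z$ (counting overlaps). $L_{\mathrm{UNIQ}}\subseteq\Sigma^*$ is the set of $w\in\Sigma^*$ such that the only $z\in\$\Sigma^*\$$ with $\Phi(z)=\Phi(\$w\$)$ is $z=\$w\$$ (this language is regular). *)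

(* Defs.v *)
From mathcomp Require Import all_boot.
Set Implicit Arguments. Unset Strict Implicit. Unset Printing Implicit Defensive.

(* Alphabet Sigma is a finType; Sigma_$ is [option Sigma] with None = $. *)
Definition delim (S : Type) : option S := None.

Definition wrap (S : Type) (w : seq S) : seq (option S) :=
  delim S :: rcons (map Some w) (delim S).

(* Phi(z)(i,j): number of positions k with z_k = i and z_(k+1) = j
   (overlapping occurrences of the factor ij). *)
Definition bigram (S : eqType) (z : seq (option S)) (i j : option S) : nat :=
  count (fun p => (p.1 == i) && (p.2 == j)) (zip z (behead z)).

Definition Phi_eq (S : eqType) (z z' : seq (option S)) : Prop :=
  forall i j, bigram z i j = bigram z' i j.

Definition L_UNIQ (S : eqType) (w : seq S) : Prop :=
  forall w' : seq S, Phi_eq (wrap w') (wrap w) -> w' = w.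

Record dfa (A : finType) := DFA {
  dfa_state : finType;
  dfa_s0 : dfa_state;
  dfa_trans : dfa_state -> A -> dfa_state;
  dfa_final : pred dfa_state }.

Definition dfa_accepts (A : finType) (M : dfa A) (w : seq A) : bool :=
  @dfa_final A M (foldl (@dfa_trans A M) (@dfa_s0 A M) w).

Definition dfa_recognizes (A : finType) (M : dfa A) (L : seq A -> Prop) : Prop :=
  forall w, dfa_accepts M w <-> L w.

(* Main.v *)
Require Import Defs.
From mathcomp Require Import all_boot.
From mathcomp Require Import zify.

Set Implicit Arguments. Unset Strict Implicit. Unset Printing Implicit Defensive.

Definition pairs (T : Type) (u : seq T) := zip u (behead u).

Lemma pairs_cons (T : Type) (x y : T) s : pairs (x :: y :: s) = (x, y) :: pairs (y :: s).
Proof. by []. Qed.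

Lemma pairs_cat (T : Type) (x : T) s1 s2 :
  pairs (x :: s1 ++ s2) = pairs (x :: s1) ++ pairs (last x s1 :: s2).
Proof. by elim: s1 x => [|y s1 IH] x //; rewrite cat_cons !pairs_cons IH. Qed.

Lemma fst_pairs (T : Type) (h : T) t : map fst (pairs (h :: t)) = belast h t.
Proof. by elim: t h => [|y t IH] h //; rewrite pairs_cons /= IH. Qed.

Lemma step (T : eqType) (x y : T) t r :
  perm_eq (pairs (x :: r)) (pairs (x :: y :: t)) -> x \notin belast y t ->
  exists r', r = y :: r' /\ perm_eq (pairs (y :: r')) (pairs (y :: t)).
Proof.
case: r => [|a r] H Hx; first by move/perm_size: H.
rewrite !pairs_cons in H.
have : (x, a) \in (x, y) :: pairs (y :: t) by rewrite -(perm_mem H) mem_head.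
rewrite inE => /orP [/eqP [Ea] | ].
  by subst a; exists r; split => //; rewrite -(perm_cons (x, y)).
move=> /(map_f fst) /=; rewrite fst_pairs => Hin.
by rewrite Hin in Hx.
Qed.

Lemma base (T : eqType) (i e : T) r :
  perm_eq (pairs (i :: r)) [:: (i, i); (i, e)] -> last i r = e -> r = [:: i; e].
Proof.
case: r => [|b [|d [|? ?]]] H //=; try by move/perm_size: H.
move=> Hd; subst d.
have : (b, e) \in [:: (i, i); (i, e)] by rewrite -(perm_mem H) /pairs /= !inE eqxx orbT.
by rewrite !inE !xpair_eqE => /orP [/andP [/eqP -> _] | /andP [/eqP -> _]].
Qed.

Lemma gen (T : eqType) (i e : T) : i != e -> forall s x r,
  uniq (x :: s) -> i \notin x :: s -> e \notin s ->
  perm_eq (pairs (x :: r)) (pairs (x :: s ++ [:: i; i; e])) -> last x r = e ->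
  r = s ++ [:: i; i; e].
Proof.
move=> Hie; elim => [|y s IH] x r Hu Hi He H Hl.
  have Hx : x \notin belast i [:: i; e].
    by move: Hi; rewrite /= !inE eq_sym => /negbTE ->.
  have [r' [Er H']] := step H Hx; subst r.
  by rewrite (base H' Hl).
have Eb : belast y (s ++ [:: i; i; e]) = y :: s ++ [:: i; i].
  by rewrite -[[:: i; i; e]]/([:: i; i] ++ [:: e]) catA cats1 belast_rcons.
have Hx : x \notin belast y (s ++ [:: i; i; e]).
  rewrite Eb; move: Hu Hi => /= /andP [Hxs _].
  rewrite !inE mem_cat !inE !negb_or => /andP [Hix _].
  move: Hxs; rewrite inE negb_or => /andP [-> ->] /=.
  by rewrite eq_sym Hix.
have [r' [Er H']] := step H Hx; subst r.
rewrite (IH y r') //.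
- by case/andP: Hu.
- by move: Hi; rewrite inE negb_or => /andP [].
- by move: He; rewrite inE negb_or => /andP [].
Qed.

Lemma phi_perm (S : eqType) (z z' : seq (option S)) :
  Phi_eq z z' -> perm_eq (pairs z) (pairs z').
Proof.
move=> H; apply/allP => [[a b]] _ /=; apply/eqP.
have Ec : forall u, count_mem (a, b) u = count (fun p => (p.1 == a) && (p.2 == b)) u.
  by move=> u; apply: eq_count => [[? ?]]; rewrite /= xpair_eqE.
by rewrite !Ec; apply: H.
Qed.

Lemma isuniq (S : finType) (s : seq S) c i :
  uniq s -> c \notin s -> i \notin s -> i != c -> L_UNIQ (s ++ [:: c; i; i]).
Proof.
move=> Hu Hc Hi Hic w' Hw.
have Hp := phi_perm Hw.
have Ew : Defs.wrap (s ++ [:: c; i; i]) =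
  None :: map Some (rcons s c) ++ [:: Some i; Some i; None].
  by rewrite /Defs.wrap -cats1 !map_cat -cats1 map_cat -!catA.
rewrite Ew /Defs.wrap in Hp.
have Hie : Some i != None :> option S by [].
have E : rcons (map Some w') None = map Some (rcons s c) ++ [:: Some i; Some i; None].
  apply: (gen Hie) Hp _.
  - rewrite /= /delim (map_inj_uniq (@Some_inj _)) rcons_uniq Hc Hu !andbT.
    by apply/mapP => -[].
  - rewrite /delim inE negb_or /= (mem_map (@Some_inj _)) mem_rcons inE negb_or Hic Hi.
    done.
  - by apply/mapP => -[].
  - by rewrite last_rcons.
apply: (inj_map (@Some_inj _)); apply: (@rcons_injl _ None).
by rewrite E -cats1 -cats1 !map_cat -!catA.
Qed.

Lemma notuniq (S : finType) (s : seq S) c i :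
  uniq s -> c \notin s -> i \in s -> ~ L_UNIQ (s ++ [:: c; i; i]).
Proof.
move=> Hu Hc Hi HL.
case/splitPr: Hi Hu Hc HL => a b Hu Hc HL.
have Hphi : Phi_eq (Defs.wrap (a ++ [:: i, i & b ++ [:: c; i]]))
                   (Defs.wrap ((a ++ i :: b) ++ [:: c; i; i])).
  move=> x y; rewrite /bigram -/(pairs _) -/(pairs _) /Defs.wrap /delim.
  rewrite -!cats1 !map_cat /= !map_cat /= -!catA /= !pairs_cat !pairs_cons !pairs_cat.
  rewrite !last_cat /= !pairs_cons !count_cat /= !count_cat /= ; lia.
have E := HL _ Hphi.
rewrite -catA in E.
have {E} E : [:: i, i & b ++ [:: c; i]] = i :: b ++ [:: c; i; i].
  by elim: a E {Hu Hc HL Hphi} => //= y a IH [].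
case: E; case: b Hu Hc {HL Hphi} => [|y b] Hu Hc /=.
  by case=> Eic; move: Hc; rewrite Eic mem_cat inE eqxx orbT.
case=> Eiy _; subst y.
by move: Hu; rewrite cat_uniq /= inE eqxx /= !andbF.
Qed.

Theorem theorem3 (S : finType) (hS : 0 < #|S|) (M : dfa S) :
  dfa_recognizes M (@L_UNIQ S) -> 2 ^ (#|S| - 1) <= #|@dfa_state S M|.
Proof.
move=> HM.
case/card_gt0P: hS => c _.
pose f (A : {set S}) := foldl (@dfa_trans S M) (@dfa_s0 S M) (enum A ++ [:: c]).
have Hinj : {in powerset [set~ c] &, injective f}.
  move=> A B; rewrite !inE => HA HB Ef.
  have key : forall A B : {set S}, A \subset [set~ c] -> B \subset [set~ c] ->
      f A = f B -> forall i, i \in A -> i \in B.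
    move=> A0 B0 HA0 HB0 Ef0 i HiA; apply/negP => HiB.
    have Hic : i != c by have := subsetP HA0 i HiA; rewrite !inE.
    have Hc0 : forall C : {set S}, C \subset [set~ c] -> c \notin enum C.
      move=> C HC; rewrite mem_enum; apply/negP => /(subsetP HC).
      by rewrite !inE eqxx.
    have H1 := HM (enum A0 ++ [:: c; i; i]).
    have H2 := HM (enum B0 ++ [:: c; i; i]).
    have Hacc : forall C : {set S}, dfa_accepts M (enum C ++ [:: c; i; i]) =
        @dfa_final S M (foldl (@dfa_trans S M) (f C) [:: i; i]).
      by move=> C; rewrite /dfa_accepts /f -foldl_cat -catA.
    rewrite !Hacc Ef0 in H1 H2.
    have Hi1 : i \in enum A0 by rewrite mem_enum.
    apply: (notuniq (enum_uniq _) (Hc0 _ HA0) Hi1).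
    apply/H1/H2; apply: isuniq.
    - exact: (enum_uniq (mem B0)).
    - exact: (Hc0 _ HB0).
    - by rewrite mem_enum; apply/negP.
    - exact: Hic.
  apply/setP => i; apply/idP/idP; first exact: key.
  exact: key.
rewrite subn1 -(cardsC1 c) -card_powerset -(card_in_imset Hinj).
exact: max_card.
Qed.
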